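(* Let $L$ be an $R_0$-algebra and $k\in[0,1)$. If $\mu$ is an $(\in,\in\vee q_k)$-fuzzy fated filter of $L$ with $\mu(1)<\tfrac{1-k}{2}$, then $\mu$ is an $(\in,\in)$-fuzzy fated filter of $L$.
   Context: An $R_0$-algebra is a bounded distributive lattice $(L,\wedge,\vee,0,1)$ with an order-reversing involution $\neg$ and a binary operation $\to$ such that for all $x,y,z\in L$: $x\to y=\neg y\to\neg x$; $1\to x=x$; $(y\to z)\wedge((x\to y)\to(x\to z))=y\to z$; $x\to(y\to z)=y\to(x\to z)$; $x\to(y\vee z)=(x\to y)\vee(x\to z)$; $(x\to y)\vee((x\to y)\to(\neg x\vee y))=1$. For $x\in L$, $t\in(0,1]$ and a fuzzy subset $\mu:L\to[0,1]$: $x_t\in\mu$ iff $\mu(x)\ge t$; $x_t\,q_k\,\mu$ iff $\mu(x)+t+k>1$; $x_t\in\vee q_k\,\mu$ iff $x_t\in\mu$ or $x_t\,q_k\,\mu$. $\mu$ is an $(\in,\in\vee q_k)$-fuzzy fated filter of $L$ if (1) for all $x\in L$, $t\in(0,1]$: $x_t\in\mu\Rightarrow 1_t\in\vee q_k\,\mu$; and (2) for all $x,a,y\in L$, $t,s\in(0,1]$: if $(a\to((x\to y)\to x))_t\in\mu$ and $a_s\in\mu$ then $x_{\min\{t,s\}}\in\vee q_k\,\mu$. An $(\in,\in)$-fuzzy fated filter is defined in the same way with ''$\in\vee q_k$'' replaced by ''$\in$'' in the conclusions of (1) and (2). *)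

(* Defs.v *)
From Stdlib Require Import Reals.
Open Scope R_scope.

(* The lattice order is x <= y iff meet x y = x. *)
Record R0_algebra (L : Type) (meet join : L -> L -> L) (zero one : L)
    (neg : L -> L) (imp : L -> L -> L) : Prop := {
  r0_meet_comm : forall x y, meet x y = meet y x;
  r0_join_comm : forall x y, join x y = join y x;
  r0_meet_assoc : forall x y z, meet x (meet y z) = meet (meet x y) z;
  r0_join_assoc : forall x y z, join x (join y z) = join (join x y) z;
  r0_absorb_mj : forall x y, meet x (join x y) = x;
  r0_absorb_jm : forall x y, join x (meet x y) = x;
  r0_distr : forall x y z, meet x (join y z) = join (meet x y) (meet x z);
  r0_zero : forall x, join zero x = x;
  r0_one : forall x, meet one x = x;
  r0_neg_invol : forall x, neg (neg x) = x;
  r0_neg_rev : forall x y, meet x y = x -> meet (neg y) (neg x) = neg y;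
  r0_contra : forall x y, imp x y = imp (neg y) (neg x);
  r0_one_imp : forall x, imp one x = x;
  r0_ax3 : forall x y z, meet (imp y z) (imp (imp x y) (imp x z)) = imp y z;
  r0_exch : forall x y z, imp x (imp y z) = imp y (imp x z);
  r0_imp_join : forall x y z, imp x (join y z) = join (imp x y) (imp x z);
  r0_ax6 : forall x y, join (imp x y) (imp (imp x y) (join (neg x) y)) = one
}.

(* fuzzy points: x_t ∈ mu, x_t q_k mu, x_t ∈∨q_k mu *)
Definition fin {L : Type} (mu : L -> R) (x : L) (t : R) : Prop := mu x >= t.
Definition fq {L : Type} (k : R) (mu : L -> R) (x : L) (t : R) : Prop :=
  mu x + t + k > 1.
Definition finq {L : Type} (k : R) (mu : L -> R) (x : L) (t : R) : Prop :=
  fin mu x t \/ fq k mu x t.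

Definition fuzzy_subset {L : Type} (mu : L -> R) : Prop :=
  forall x, 0 <= mu x <= 1.

Definition in_inq_fated_filter {L : Type} (one : L) (imp : L -> L -> L)
    (k : R) (mu : L -> R) : Prop :=
  (forall x t, 0 < t <= 1 -> fin mu x t -> finq k mu one t) /\
  (forall x a y t s, 0 < t <= 1 -> 0 < s <= 1 ->
     fin mu (imp a (imp (imp x y) x)) t -> fin mu a s ->
     finq k mu x (Rmin t s)).

Definition in_in_fated_filter {L : Type} (one : L) (imp : L -> L -> L)
    (mu : L -> R) : Prop :=
  (forall x t, 0 < t <= 1 -> fin mu x t -> fin mu one t) /\
  (forall x a y t s, 0 < t <= 1 -> 0 < s <= 1 ->
     fin mu (imp a (imp (imp x y) x)) t -> fin mu a s ->
     fin mu x (Rmin t s)).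

(* Main.v *)
Require Import Defs.
From Stdlib Require Import Reals Lra.
Open Scope R_scope.

Theorem corollary3p9 (L : Type) (meet join : L -> L -> L) (zero one : L)
    (neg : L -> L) (imp : L -> L -> L) (k : R) (mu : L -> R) :
  R0_algebra L meet join zero one neg imp ->
  0 <= k < 1 ->
  fuzzy_subset mu ->
  in_inq_fated_filter one imp k mu ->
  mu one < (1 - k) / 2 ->
  in_in_fated_filter one imp mu.
Proof.
  intros _ Hk Hf [H1 H2] Hone. unfold fin, fq, finq in H1, H2.
  unfold fin, fq, finq in *.
  assert (Hle : forall y t, 0 < t <= 1 -> mu y >= t -> mu one >= t).
  { intros y t Ht Hy.
    destruct (Rle_dec t (mu one)) as [h|h]; [lra|]. apply Rnot_le_lt in h.
    set (t' := Rmin t ((1 - k) / 2)).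
    assert (t' <= t /\ t' <= (1-k)/2 /\ (t' = t \/ t' = (1-k)/2)).
    { unfold t', Rmin; destruct (Rle_dec t ((1-k)/2)); lra. }
    destruct H as [? [? [e|e]]]; destruct (H1 y t') as [h1|h1]; unfold fin, fq in *; lra. }
  split.
  - exact Hle.
  - intros x a y t s Ht Hs Ha Has.
    assert (Hx : mu x <= mu one).
    { destruct (Hf x) as [hx0 hx1].
      destruct (Req_dec (mu x) 0) as [e|e].
      + destruct (Hf one); lra.
      + specialize (Hle x (mu x)). lra. }
    set (t' := Rmin t ((1 - k) / 2)).
    set (s' := Rmin s ((1 - k) / 2)).
    assert (t' <= t /\ t' <= (1-k)/2 /\ (t' = t \/ t' = (1-k)/2)).
    { unfold t', Rmin; destruct (Rle_dec t ((1-k)/2)); lra. }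
    assert (s' <= s /\ s' <= (1-k)/2 /\ (s' = s \/ s' = (1-k)/2)).
    { unfold s', Rmin; destruct (Rle_dec s ((1-k)/2)); lra. }
    assert (Rmin t' s' <= t' /\ Rmin t' s' <= s' /\ (Rmin t' s' = t' \/ Rmin t' s' = s')).
    { unfold Rmin; destruct (Rle_dec t' s'); lra. }
    assert (Rmin t s <= t /\ Rmin t s <= s /\ (Rmin t s = t \/ Rmin t s = s)).
    { unfold Rmin; destruct (Rle_dec t s); lra. }
    destruct H as [? [? [e1|e1]]]; destruct H0 as [? [? [e2|e2]]];
    destruct H3 as [? [? [e3|e3]]]; destruct H4 as [? [? [e4|e4]]];
    destruct (H2 x a y t' s') as [h|h]; unfold fin, fq in *; lra.
Qed.
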